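(* Let $\Gamma\curvearrowright X, I$ be an almost simple dynamical ideal. Then in the associated permutation model $W[[X]]$, the union of any well-orderable set of well-orderable sets is well-orderable.
   Context: Work in ZFC. $V[[X]]$ is the well-founded model of ZFCA with set of atoms exactly $X$ in which every set of elements is represented by an element; a group action of $\Gamma$ on $X$ extends to $V[[X]]$ by $\gamma\cdot A=\{\gamma\cdot B:B\in A\}$. $\mathrm{stab}(A)=\{\gamma:\gamma\cdot A=A\}$, $\mathrm{pstab}(a)=\{\gamma:\gamma\cdot B=B\ \forall B\in a\}$. A dynamical ideal $\Gamma\curvearrowright X, I$: a group $\Gamma$ acting on $X$ and a $\Gamma$-invariant ideal $I$ on $X$ containing all singletons. Its permutation model $W[[X]]$ is the class of $A\in V[[X]]$ such that $A$ and every element of its transitive closure are symmetric, where $A$ is symmetric if $\mathrm{pstab}(b)\subseteq\mathrm{stab}(A)$ for some $b\in I$. The dynamical ideal is simple if for all $a\subseteq b$ in $I$, the only normal subgroup of $\mathrm{pstab}(a)$ containing $\mathrm{pstab}(b)$ is $\mathrm{pstab}(a)$ itself; it is almost simple if every set in $I$ has a superset $a\in I$ such that for every $b\in I$ with $a\subseteq b$, the only normal subgroup of $\mathrm{pstab}(a)$ containing $\mathrm{pstab}(b)$ is $\mathrm{pstab}(a)$. *)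

(* Defs.v *)
Set Implicit Arguments.

Definition is_group (G : Type) (mul : G -> G -> G) (inv : G -> G) (one : G) : Prop :=
  (forall a b c, mul a (mul b c) = mul (mul a b) c) /\
  (forall a, mul one a = a) /\
  (forall a, mul (inv a) a = one).

Definition is_action (G X : Type) (mul : G -> G -> G) (one : G) (act : G -> X -> X) : Prop :=
  (forall x, act one x = x) /\
  (forall g h x, act (mul g h) x = act g (act h x)).

Definition subsetX (X : Type) (a b : X -> Prop) : Prop := forall x, a x -> b x.

Definition dyn_ideal (G X : Type) (act : G -> X -> X) (I : (X -> Prop) -> Prop) : Prop :=
  I (fun _ => False) /\
  (forall a b, I b -> subsetX a b -> I a) /\
  (forall a b, I a -> I b -> I (fun x => a x \/ b x)) /\
  (forall y : X, I (fun x => x = y)) /\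
  (forall g a, I a -> I (fun x => exists y, a y /\ x = act g y)).

Definition pstab (G X : Type) (act : G -> X -> X) (a : X -> Prop) (g : G) : Prop :=
  forall x, a x -> act g x = x.

Definition normal_subgroup_of (G : Type) (mul : G -> G -> G) (inv : G -> G) (one : G)
  (H N : G -> Prop) : Prop :=
  N one /\
  (forall g h, N g -> N h -> N (mul g h)) /\
  (forall g, N g -> N (inv g)) /\
  (forall g, N g -> H g) /\
  (forall h n, H h -> N n -> N (mul (mul h n) (inv h))).

Definition almost_simple (G X : Type) (mul : G -> G -> G) (inv : G -> G) (one : G)
  (act : G -> X -> X) (I : (X -> Prop) -> Prop) : Prop :=
  forall a0, I a0 ->
    exists a, I a /\ subsetX a0 a /\
      forall b, I b -> subsetX a b ->
        forall N : G -> Prop,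
          normal_subgroup_of mul inv one (pstab act a) N ->
          (forall g, pstab act b g -> N g) ->
          forall g, pstab act a g -> N g.

(* ---------- V[[X]]: Aczel-style well-founded sets with atoms X ---------- *)

Inductive pset (X : Type) : Type :=
| Atom : X -> pset X
| Node : forall K : Type, (K -> pset X) -> pset X.

Arguments Atom {X} _.
Arguments Node {X} _ _.

Fixpoint eqs (X : Type) (a b : pset X) {struct a} : Prop :=
  match a with
  | Atom x => match b with Atom y => x = y | Node _ _ => False end
  | Node K f =>
      match b with
      | Atom _ => False
      | Node J g =>
          (forall i, exists j, eqs (f i) (g j)) /\
          (forall j, exists i, eqs (f i) (g j))
      end
  end.

Definition mem (X : Type) (z a : pset X) : Prop :=
  match a with
  | Atom _ => False
  | Node K f => exists i, eqs z (f i)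
  end.

Definition is_set (X : Type) (a : pset X) : Prop :=
  match a with Atom _ => False | Node _ _ => True end.

Definition idx (X : Type) (a : pset X) : Type :=
  match a with Atom _ => Empty_set | Node K _ => K end.

Definition elt (X : Type) (a : pset X) : idx a -> pset X :=
  match a as a0 return idx a0 -> pset X with
  | Atom _ => fun e => match e with end
  | Node K f => f
  end.

Definition union (X : Type) (A : pset X) : pset X :=
  Node {i : idx A & idx (elt A i)} (fun p => elt (elt A (projT1 p)) (projT2 p)).

Definition upair (X : Type) (a b : pset X) : pset X :=
  Node bool (fun t => if t then a else b).
Definition kpair (X : Type) (a b : pset X) : pset X :=
  upair (upair a a) (upair a b).

Fixpoint pact (G X : Type) (act : G -> X -> X) (g : G) (a : pset X) : pset X :=
  match a with
  | Atom x => Atom (act g x)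
  | Node K f => Node K (fun i => pact act g (f i))
  end.

Definition symmetric (G X : Type) (act : G -> X -> X) (I : (X -> Prop) -> Prop)
  (A : pset X) : Prop :=
  exists b, I b /\ forall g, pstab act b g -> eqs (pact act g A) A.

Fixpoint inW (G X : Type) (act : G -> X -> X) (I : (X -> Prop) -> Prop)
  (A : pset X) : Prop :=
  match A with
  | Atom x => symmetric act I (Atom x)
  | Node J f => symmetric act I (Node J f) /\ forall j, inW act I (f j)
  end.

Definition well_ordering (X : Type) (R A : pset X) : Prop :=
  let r := fun x y => mem (kpair x y) R in
  (forall p, mem p R -> exists x y, mem x A /\ mem y A /\ eqs p (kpair x y)) /\
  (forall x, mem x A -> ~ r x x) /\
  (forall x y z, mem x A -> mem y A -> mem z A -> r x y -> r y z -> r x z) /\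
  (forall x y, mem x A -> mem y A -> r x y \/ eqs x y \/ r y x) /\
  (forall P : pset X -> Prop, (exists x, mem x A /\ P x) ->
     exists m, mem m A /\ P m /\ forall y, mem y A -> P y -> ~ r y m).

Definition wellorderable_in_W (G X : Type) (act : G -> X -> X) (I : (X -> Prop) -> Prop)
  (A : pset X) : Prop :=
  exists R, inW act I R /\ is_set R /\ well_ordering R A.

(* Main.v *)
Require Import Defs.
From Stdlib Require Import Classical FunctionalExtensionality PropExtensionality ClassicalEpsilon.
Set Implicit Arguments.

Section PS.
Variable X : Type.
Implicit Types a b c x y z : pset X.

Lemma eqs_refl : forall a : pset X, eqs a a.
Proof.
  induction a as [x|K f IH]; simpl; auto.
  split; intro i; exists i; apply IH.
Qed.

Lemma eqs_sym : forall a b : pset X, eqs a b -> eqs b a.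
Proof.
  induction a as [x|K f IH]; destruct b as [y|J g]; simpl; auto.
  intros [H1 H2]; split.
  - intro j; destruct (H2 j) as [i Hi]; exists i; auto.
  - intro i; destruct (H1 i) as [j Hj]; exists j; auto.
Qed.

Lemma eqs_trans : forall a b c : pset X, eqs a b -> eqs b c -> eqs a c.
Proof.
  induction a as [x|K f IH]; destruct b as [y|J g]; destruct c as [w|L h];
    simpl; intros; try contradiction; try congruence.
  destruct H as [H1 H2]; destruct H0 as [H3 H4]; split.
  - intro i; destruct (H1 i) as [j Hj]; destruct (H3 j) as [l Hl].
    exists l; eauto.
  - intro l; destruct (H4 l) as [j Hj]; destruct (H2 j) as [i Hi].
    exists i; eauto.
Qed.

Lemma mem_eqs_l : forall z z' a : pset X, eqs z z' -> mem z a -> mem z' a.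
Proof.
  intros z z' [x|K f] H; simpl; auto.
  intros [i Hi]; exists i; eapply eqs_trans; [apply eqs_sym; eauto| eauto].
Qed.

Lemma mem_eqs_r : forall z a a' : pset X, eqs a a' -> mem z a -> mem z a'.
Proof.
  intros z [x|K f] [y|J g]; simpl; try tauto.
  intros [H1 H2] [i Hi]. destruct (H1 i) as [j Hj]. exists j; eapply eqs_trans; eauto.
Qed.

Lemma eqs_node_pw : forall K (f g : K -> pset X), (forall i, eqs (f i) (g i)) ->
  eqs (Node K f) (Node K g).
Proof. intros; simpl; split; intro i; exists i; auto. Qed.

Lemma mem_node : forall K (f : K -> pset X) i, mem (f i) (Node K f).
Proof. intros; exists i; apply eqs_refl. Qed.

Lemma mem_upair : forall z a b : pset X, mem z (upair a b) <-> eqs z a \/ eqs z b.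
Proof.
  intros; simpl; split.
  - intros [[|] H]; auto.
  - intros [H|H]; [exists true|exists false]; auto.
Qed.

Lemma upair_eqs : forall a a' b b' : pset X, eqs a a' -> eqs b b' ->
  eqs (upair a b) (upair a' b').
Proof. intros; apply eqs_node_pw; intros [|]; auto. Qed.

Lemma kpair_eqs : forall a a' b b' : pset X, eqs a a' -> eqs b b' ->
  eqs (kpair a b) (kpair a' b').
Proof. intros; apply eqs_node_pw; intros [|]; apply upair_eqs; auto. Qed.

Lemma single_eqs : forall x c d : pset X, eqs (upair x x) (upair c d) -> eqs x c /\ eqs x d.
Proof.
  intros x c d H. split.
  - assert (mem c (upair x x)) by (eapply mem_eqs_r; [apply eqs_sym; eauto| apply mem_upair; left; apply eqs_refl]).
    apply mem_upair in H0. destruct H0; apply eqs_sym; auto.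
  - assert (mem d (upair x x)) by (eapply mem_eqs_r; [apply eqs_sym; eauto| apply mem_upair; right; apply eqs_refl]).
    apply mem_upair in H0. destruct H0; apply eqs_sym; auto.
Qed.

Lemma kpair_inj : forall x y x' y' : pset X, eqs (kpair x y) (kpair x' y') ->
  eqs x x' /\ eqs y y'.
Proof.
  intros x y x' y' H.
  assert (Hm : forall u, mem u (kpair x y) -> mem u (kpair x' y')) by (intros; eapply mem_eqs_r; eauto).
  assert (Hm' : forall u, mem u (kpair x' y') -> mem u (kpair x y)) by (intros; eapply mem_eqs_r; [apply eqs_sym|]; eauto).
  assert (Hx : eqs x x').
  { assert (mem (upair x x) (kpair x' y')) by (apply Hm; apply mem_upair; left; apply eqs_refl).
    apply mem_upair in H0; destruct H0 as [H0|H0].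
    - apply single_eqs in H0; tauto.
    - apply single_eqs in H0; tauto. }
  split; auto.
  assert (mem (upair x y) (kpair x' y')) by (apply Hm; apply mem_upair; right; apply eqs_refl).
  apply mem_upair in H0; destruct H0 as [H0|H0].
  - apply eqs_sym in H0. apply single_eqs in H0. destruct H0 as [_ Hyx'].
    assert (H1 : mem (upair x' y') (kpair x y)) by (apply Hm'; apply mem_upair; right; apply eqs_refl).
    apply mem_upair in H1; destruct H1 as [H1|H1].
    + apply eqs_sym in H1; apply single_eqs in H1. destruct H1 as [_ H1].
      eapply eqs_trans; [apply eqs_sym; exact Hyx'|]. eapply eqs_trans; [apply eqs_sym; exact Hx|exact H1].
    + assert (H2 : eqs (upair x' y') (upair x' x')).
      { eapply eqs_trans; [exact H1|]. apply upair_eqs; [exact Hx| apply eqs_sym; exact Hyx']. }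
      apply eqs_sym in H2. apply single_eqs in H2. destruct H2 as [_ H2].
      eapply eqs_trans; [apply eqs_sym; exact Hyx'| exact H2].
  - assert (H1 : mem y (upair x' y')) by (eapply mem_eqs_r; [exact H0|apply mem_upair; right; apply eqs_refl]).
    apply mem_upair in H1; destruct H1 as [H1|H1]; auto.
    assert (H2 : mem y' (upair x y)) by (eapply mem_eqs_r; [apply eqs_sym; exact H0|apply mem_upair; right; apply eqs_refl]).
    apply mem_upair in H2; destruct H2 as [H2|H2].
    + eapply eqs_trans; [exact H1|]. eapply eqs_trans; [apply eqs_sym; exact Hx|]. apply eqs_sym; exact H2.
    + apply eqs_sym; exact H2.
Qed.

End PS.
Unset Implicit Arguments.
Set Implicit Arguments.

Section GA.
Variables (X G : Type) (mul : G -> G -> G) (inv : G -> G) (one : G) (act : G -> X -> X).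
Hypothesis HG : is_group mul inv one.
Hypothesis Hact : is_action mul one act.

Lemma mul_inv_r : forall a, mul a (inv a) = one.
Proof.
  destruct HG as [Has [H1 Hi]]. intro a.
  rewrite <- (H1 (mul a (inv a))).
  rewrite <- (Hi (inv a)) at 1.
  rewrite <- Has. rewrite (Has (inv a) a (inv a)). rewrite Hi, H1. apply Hi.
Qed.

Notation pa := (pact act).

Lemma pact_eqs : forall g a b, eqs a b -> eqs (pa g a) (pa g b).
Proof.
  intro g; induction a as [x|K f IH]; destruct b as [y|J h]; simpl; try tauto.
  - intro; subst; auto.
  - intros [H1 H2]; split.
    + intro i; destruct (H1 i) as [j Hj]; exists j; auto.
    + intro j; destruct (H2 j) as [i Hi]; exists i; auto.
Qed.

Lemma pact_one : forall a, eqs (pa one a) a.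
Proof.
  induction a as [x|K f IH]; simpl.
  - apply (proj1 Hact).
  - split; intro i; exists i; auto.
Qed.

Lemma pact_mul : forall g h a, eqs (pa (mul g h) a) (pa g (pa h a)).
Proof.
  intros g h; induction a as [x|K f IH]; simpl.
  - apply (proj2 Hact).
  - split; intro i; exists i; auto.
Qed.

Lemma pact_inv_l : forall g a, eqs (pa (inv g) (pa g a)) a.
Proof.
  intros. eapply eqs_trans; [apply eqs_sym; apply pact_mul|].
  destruct HG as [_ [_ Hi]]. rewrite Hi. apply pact_one.
Qed.

Lemma pact_inv_r : forall g a, eqs (pa g (pa (inv g) a)) a.
Proof.
  intros. eapply eqs_trans; [apply eqs_sym; apply pact_mul|].
  rewrite mul_inv_r. apply pact_one.
Qed.

Lemma mem_pact : forall g z a, mem z a -> mem (pa g z) (pa g a).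
Proof.
  intros g z [x|K f]; simpl; try tauto.
  intros [i Hi]; exists i; apply pact_eqs; auto.
Qed.

Lemma mem_pact_inv : forall g w a, mem w (pa g a) -> exists z, mem z a /\ eqs w (pa g z).
Proof.
  intros g w [x|K f]; simpl; try tauto.
  intros [i Hi]; exists (f i); split; auto. apply mem_node.
Qed.

Lemma pact_kpair : forall g x y, eqs (pa g (kpair x y)) (kpair (pa g x) (pa g y)).
Proof.
  intros; apply eqs_node_pw; intros [|]; apply eqs_node_pw; intros [|]; apply eqs_refl.
Qed.

Lemma pact_upair : forall g x y, eqs (pa g (upair x y)) (upair (pa g x) (pa g y)).
Proof.
  intros; apply eqs_node_pw; intros [|]; apply eqs_refl.
Qed.

Definition rel (R x y : pset X) : Prop := mem (kpair x y) R.

Lemma rel_eqs : forall R x y x' y', rel R x y -> eqs x x' -> eqs y y' -> rel R x' y'.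
Proof.
  unfold rel; intros. eapply mem_eqs_l; [|eauto]. apply kpair_eqs; auto.
Qed.

Lemma rel_pact : forall R g x y, eqs (pa g R) R -> rel R x y -> rel R (pa g x) (pa g y).
Proof.
  unfold rel; intros. eapply mem_eqs_r; [eauto|].
  eapply mem_eqs_l; [apply pact_kpair|]. apply mem_pact; auto.
Qed.

Lemma wo_fix : forall (S R : pset X) (H : G -> Prop), well_ordering R S ->
  (forall h, H h -> H (inv h)) ->
  (forall h, H h -> eqs (pa h S) S /\ eqs (pa h R) R) ->
  forall h, H h -> forall x, mem x S -> eqs (pa h x) x.
Proof.
  intros S R H [_ [Hirr [_ [Htri Hmin]]]] Hinv HS h Hh x Hx.
  apply NNPP; intro Hn.
  destruct (Hmin (fun x => exists h, H h /\ ~ eqs (pa h x) x)) as [m [Hm [[g [Hg Hgm]] Hmm]]].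
  { exists x; split; auto; exists h; auto. }
  assert (HgS : forall k z, H k -> mem z S -> mem (pa k z) S).
  { intros k z Hk Hz. eapply mem_eqs_r; [apply (HS k Hk)|]. apply mem_pact; auto. }
  assert (Hfix : forall y, mem y S -> rel R y m -> forall k, H k -> eqs (pa k y) y).
  { intros y Hy Hr k Hk. apply NNPP; intro Hk'. apply (Hmm y Hy); [exists k; auto| exact Hr]. }
  destruct (Htri m (pa g m) Hm (HgS g m Hg Hm)) as [Hr|[He|Hr]].
  -
    assert (Hr' : rel R (pa (inv g) m) m).
    { eapply rel_eqs; [apply (rel_pact R (inv g)); [apply (HS _ (Hinv g Hg))| exact Hr]|apply eqs_refl|].
      apply pact_inv_l. }
    assert (Hy : mem (pa (inv g) m) S) by (apply HgS; auto).
    pose proof (Hfix _ Hy Hr' g Hg) as Hf.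
    assert (Hmy : eqs m (pa (inv g) m)).
    { eapply eqs_trans; [apply eqs_sym; apply pact_inv_r|exact Hf]. }
    apply (Hirr m Hm). eapply rel_eqs; [exact Hr'|apply eqs_sym; exact Hmy|apply eqs_refl].
  - apply Hgm; apply eqs_sym; auto.
  - pose proof (Hfix _ (HgS g m Hg Hm) Hr g Hg) as Hf.
    apply Hgm. apply (pact_eqs (inv g)) in Hf.
    eapply eqs_trans; [apply eqs_sym; exact (pact_inv_l g (pa g m))|].
    eapply eqs_trans; [exact Hf|]. apply pact_inv_l.
Qed.

End GA.
Unset Implicit Arguments.
Set Implicit Arguments.

Section SY.
Variables (X G : Type) (mul : G -> G -> G) (inv : G -> G) (one : G) (act : G -> X -> X)
  (I : (X -> Prop) -> Prop).
Hypothesis HG : is_group mul inv one.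
Hypothesis Hact : is_action mul one act.
Hypothesis HI : dyn_ideal act I.
Notation pa := (pact act).

Lemma pstab_inv : forall a g, pstab act a g -> pstab act a (inv g).
Proof.
  unfold pstab; intros a g H x Hx. rewrite <- (H x Hx) at 1.
  rewrite <- (proj2 Hact). destruct HG as [_ [_ Hi]]. rewrite Hi. apply (proj1 Hact).
Qed.

Lemma pstab_mul : forall a g h, pstab act a g -> pstab act a h -> pstab act a (mul g h).
Proof. unfold pstab; intros. rewrite (proj2 Hact). rewrite H0, H; auto. Qed.

Lemma pstab_one : forall a, pstab act a one.
Proof. unfold pstab; intros. apply (proj1 Hact). Qed.

Lemma pstab_sub : forall a b g, subsetX a b -> pstab act b g -> pstab act a g.
Proof. unfold pstab, subsetX; auto. Qed.

Lemma I_union : forall a b, I a -> I b -> I (fun x => a x \/ b x).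
Proof. destruct HI as [_ [_ [H _]]]; auto. Qed.

Lemma symmetric_eqs : forall a a', symmetric act I a -> eqs a a' -> symmetric act I a'.
Proof.
  intros a a' [b [Hb H]] He. exists b; split; auto. intros g Hg.
  eapply eqs_trans; [apply pact_eqs; apply eqs_sym; exact He|].
  eapply eqs_trans; [apply H; auto| exact He].
Qed.

Lemma inW_sym : forall a, inW act I a -> symmetric act I a.
Proof. intros [x|K f]; simpl; tauto. Qed.

Lemma inW_elt : forall a, inW act I a -> forall j, inW act I (elt a j).
Proof. intros [x|K f]; simpl; [intros _ []| intros [_ H]; exact H]. Qed.

Lemma mem_sym : forall A y, inW act I A -> mem y A -> symmetric act I y.
Proof.
  intros [x|K f] y; simpl; try tauto. intros [_ H] [i Hi].
  eapply symmetric_eqs; [apply inW_sym; apply H|apply eqs_sym; exact Hi].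
Qed.

Lemma inW_upair : forall x y, inW act I x -> inW act I y -> inW act I (upair x y).
Proof.
  intros x y Hx Hy. simpl. split; [|intros [|]; auto].
  destruct (inW_sym _ Hx) as [bx [Hbx Hx']]. destruct (inW_sym _ Hy) as [by' [Hby Hy']].
  exists (fun z => bx z \/ by' z); split; [apply I_union; auto|].
  intros g Hg. apply eqs_node_pw; intros [|].
  - apply Hx'. eapply pstab_sub; [|exact Hg]. intros z Hz; auto.
  - apply Hy'. eapply pstab_sub; [|exact Hg]. intros z Hz; auto.
Qed.

Lemma inW_kpair : forall x y, inW act I x -> inW act I y -> inW act I (kpair x y).
Proof. intros. apply inW_upair; apply inW_upair; auto. Qed.



Lemma fix_set : forall g K (f : K -> pset X), (forall z, mem z (Node K f) -> eqs (pa g z) z) ->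
  eqs (pa g (Node K f)) (Node K f).
Proof. intros; simpl; split; intro i; exists i; apply H; apply mem_node. Qed.

Lemma pact_node : forall g K (F : K -> pset X), pa g (Node K F) = Node K (fun i => pa g (F i)).
Proof. reflexivity. Qed.

Definition buildR K (f : K -> pset X) (r : pset X -> pset X -> Prop) : pset X :=
  Node {p : K * K & r (f (fst p)) (f (snd p))}
       (fun p => kpair (f (fst (projT1 p))) (f (snd (projT1 p)))).

Section B.
Variables (K : Type) (f : K -> pset X) (r : pset X -> pset X -> Prop).
Hypothesis Hresp : forall x y x' y', r x y -> eqs x x' -> eqs y y' -> r x' y'.
Let S := Node K f.

Lemma rel_build : forall x y, rel (buildR f r) x y <-> (mem x S /\ mem y S /\ r x y).
Proof.
  intros x y; unfold rel; simpl; split.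
  - intros [[[i j] Hij] He]; simpl in *. apply kpair_inj in He. destruct He as [H1 H2].
    split; [exists i; auto|split; [exists j; auto|]].
    eapply Hresp; [exact Hij|apply eqs_sym; auto|apply eqs_sym; auto].
  - intros [[i Hi] [[j Hj] Hr]].
    assert (Hr' : r (f i) (f j)) by (eapply Hresp; eauto).
    exists (existT _ (i, j) Hr'); simpl. apply kpair_eqs; auto.
Qed.

Lemma wo_build :
  (forall x, mem x S -> ~ r x x) ->
  (forall x y z, mem x S -> mem y S -> mem z S -> r x y -> r y z -> r x z) ->
  (forall x y, mem x S -> mem y S -> r x y \/ eqs x y \/ r y x) ->
  (forall P : pset X -> Prop, (exists x, mem x S /\ P x) ->
     exists m, mem m S /\ P m /\ forall y, mem y S -> P y -> ~ r y m) ->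
  well_ordering (buildR f r) S.
Proof.
  intros Hirr Htr Htri Hmin.
  split; [|split; [|split; [|split]]].
  - intros p [[[i j] Hij] He]; simpl in *. exists (f i), (f j).
    split; [apply mem_node|split; [apply mem_node|exact He]].
  - intros x Hx H. apply (rel_build x x) in H. apply (Hirr x Hx); tauto.
  - intros x y z Hx Hy Hz H1 H2. apply (rel_build x y) in H1. apply (rel_build y z) in H2.
    apply (rel_build x z). split; auto. split; auto. apply (Htr x y z); tauto.
  - intros x y Hx Hy. destruct (Htri x y Hx Hy) as [H|[H|H]].
    + left; apply (rel_build x y); auto.
    + right; left; auto.
    + right; right; apply (rel_build y x); auto.
  - intros P HP. destruct (Hmin P HP) as [m [Hm [Pm Hmm]]]. exists m; split; auto; split; auto.
    intros y Hy Py H. apply (rel_build y m) in H. apply (Hmm y Hy Py); tauto.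
Qed.

Lemma sym_build : forall a, I a -> (forall g, pstab act a g -> forall z, mem z S -> eqs (pa g z) z) ->
  symmetric act I (buildR f r).
Proof.
  intros a Ha Hfix. exists a; split; auto. intros g Hg.
  unfold buildR; rewrite pact_node. apply eqs_node_pw; intro p.
  eapply eqs_trans; [apply pact_kpair|]. apply kpair_eqs; apply Hfix; auto; apply mem_node.
Qed.

Lemma inW_build : forall a, I a -> (forall g, pstab act a g -> forall z, mem z S -> eqs (pa g z) z) ->
  (forall i, inW act I (f i)) -> inW act I (buildR f r).
Proof.
  intros a Ha Hfix Hf. change (symmetric act I (buildR f r) /\ forall p : {p : K * K & r (f (fst p)) (f (snd p))}, inW act I (kpair (f (fst (projT1 p))) (f (snd (projT1 p))))).
  split; [eapply sym_build; eauto|]. intro p; apply inW_kpair; auto.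
Qed.

End B.
End SY.
Unset Implicit Arguments.
Set Implicit Arguments.

Section GEN.
Variable X : Type.

Lemma mem_elt_ex : forall (z y : pset X), mem z y -> exists j : idx y, eqs z (elt y j).
Proof. intros z [x|K f]; simpl; tauto. Qed.

Lemma mem_elt : forall (y : pset X) j, mem (elt y j) y.
Proof. intros [x|K f] j; simpl; [destruct j|exists j; apply eqs_refl]. Qed.

Lemma mem_union : forall K (f : K -> pset X) z,
  mem z (union (Node K f)) <-> exists y, mem y (Node K f) /\ mem z y.
Proof.
  intros K f z; split.
  - intros [[i j] H]; simpl in *. exists (f i); split; [apply mem_node|].
    eapply mem_eqs_l; [apply eqs_sym; exact H|apply mem_elt].
  - intros [y [[i Hi] Hz]]. assert (Hz' : mem z (f i)) by (eapply mem_eqs_r; eauto).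
    destruct (mem_elt_ex z (f i) Hz') as [j Hj]. exists (existT _ i j). exact Hj.
Qed.

Lemma wo_eqs_set : forall (R S S' : pset X), well_ordering R S -> eqs S S' -> well_ordering R S'.
Proof.
  intros R S S' [H1 [H2 [H3 [H4 H5]]]] He.
  assert (Hm : forall x, mem x S' -> mem x S) by (intros; eapply mem_eqs_r; [apply eqs_sym|]; eauto).
  assert (Hm' : forall x, mem x S -> mem x S') by (intros; eapply mem_eqs_r; eauto).
  split; [|split; [|split; [|split]]].
  - intros p Hp; destruct (H1 p Hp) as [x [y [Hx [Hy Hp']]]]. exists x, y; auto.
  - intros x Hx; apply H2; auto.
  - intros x y z Hx Hy Hz; apply H3; auto.
  - intros x y Hx Hy; apply H4; auto.
  - intros P [x [Hx Px]]. destruct (H5 P) as [m [Hm1 [Hm2 Hm3]]]; [exists x; auto|].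
    exists m; split; auto; split; auto.
Qed.
End GEN.
Unset Implicit Arguments.
Set Implicit Arguments.

Section LEX.
Variables (X : Type) (K : Type) (f : K -> pset X) (RA : pset X).
Let A := Node K f.
Hypothesis HwoA : well_ordering RA A.
Hypothesis HyW : forall y, mem y A -> exists R, well_ordering R y.

Definition cls (y : pset X) : pset X -> Prop := fun w => eqs w y.

Lemma cls_eq : forall y y', eqs y y' -> cls y = cls y'.
Proof.
  intros. apply functional_extensionality; intro w. apply propositional_extensionality.
  unfold cls; split; intro; eapply eqs_trans; eauto; apply eqs_sym; auto.
Qed.

Definition Wch (C : pset X -> Prop) : pset X :=
  epsilon (inhabits (Node Empty_set (fun e => match e with end)))
    (fun R => forall y, mem y A -> C = cls y -> well_ordering R y).

Definition W y := Wch (cls y).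

Lemma W_spec : forall y, mem y A -> well_ordering (W y) y.
Proof.
  intros y Hy. unfold W, Wch.
  apply (epsilon_spec (inhabits (Node Empty_set (fun e => match e with end)))
    (fun R => forall y', mem y' A -> cls y = cls y' -> well_ordering R y')); auto.
  destruct (HyW Hy) as [R HR]. exists R. intros y' Hy' He.
  eapply wo_eqs_set; [exact HR|]. assert (cls y y) by apply eqs_refl.
  rewrite He in H. exact H.
Qed.

Lemma W_eqs : forall y y', eqs y y' -> W y = W y'.
Proof. intros y y' H; unfold W; rewrite (cls_eq y y' H); auto. Qed.

Definition rA := rel RA.
Definition rW y := rel (W y).

Definition lc z y := mem y A /\ mem z y /\ forall y', mem y' A -> mem z y' -> ~ rA y' y.

Definition rU z1 z2 := exists y1 y2, lc z1 y1 /\ lc z2 y2 /\ (rA y1 y2 \/ (eqs y1 y2 /\ rW y1 z1 z2)).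

Let U := union A.

Lemma rA_eqs : forall x y x' y', rA x y -> eqs x x' -> eqs y y' -> rA x' y'.
Proof. unfold rA; intros; eapply rel_eqs; eauto. Qed.
Lemma rW_eqs : forall w x y x' y', rW w x y -> eqs x x' -> eqs y y' -> rW w x' y'.
Proof. unfold rW; intros; eapply rel_eqs; eauto. Qed.

Lemma lc_eqs_z : forall z y z', lc z y -> eqs z z' -> lc z' y.
Proof.
  intros z y z' [H1 [H2 H3]] He. split; auto. split; [eapply mem_eqs_l; eauto|].
  intros y' Hy' Hz'. apply H3; auto. eapply mem_eqs_l; [apply eqs_sym|]; eauto.
Qed.

Lemma lc_eqs_y : forall z y y', lc z y -> eqs y y' -> lc z y'.
Proof.
  intros z y y' [H1 [H2 H3]] He. split; [eapply mem_eqs_l; eauto|].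
  split; [eapply mem_eqs_r; eauto|].
  intros y'' Hy'' Hz Hr. apply (H3 y'' Hy'' Hz). eapply rA_eqs; [exact Hr|apply eqs_refl|apply eqs_sym; auto].
Qed.

Lemma lc_ex : forall z, mem z U -> exists y, lc z y.
Proof.
  intros z Hz. apply mem_union in Hz. destruct HwoA as [_ [_ [_ [_ Hmin]]]].
  destruct (Hmin (fun y => mem z y)) as [m [Hm [Hzm Hmm]]]; auto.
  exists m; split; auto; split; auto.
Qed.

Lemma lc_uniq : forall z y1 y2, lc z y1 -> lc z y2 -> eqs y1 y2.
Proof.
  intros z y1 y2 [H1 [H2 H3]] [H4 [H5 H6]]. destruct HwoA as [_ [_ [_ [Htri _]]]].
  destruct (Htri y1 y2 H1 H4) as [Hr|[He|Hr]]; auto.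
  - exfalso; apply (H6 y1 H1 H2 Hr).
  - exfalso; apply (H3 y2 H4 H5 Hr).
Qed.

Lemma lc_mem : forall z y, lc z y -> mem z U.
Proof. intros z y [H1 [H2 _]]. apply mem_union. exists y; auto. Qed.

Lemma rU_eqs : forall x y x' y', rU x y -> eqs x x' -> eqs y y' -> rU x' y'.
Proof.
  intros x y x' y' [y1 [y2 [L1 [L2 Hr]]]] Hx Hy. exists y1, y2.
  split; [eapply lc_eqs_z; eauto|]. split; [eapply lc_eqs_z; eauto|].
  destruct Hr as [Hr|[He Hr]]; auto. right; split; auto. eapply rW_eqs; eauto.
Qed.

Lemma rU_irr : forall x, mem x U -> ~ rU x x.
Proof.
  intros x _ [y1 [y2 [L1 [L2 Hr]]]]. pose proof (lc_uniq L1 L2) as He.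
  destruct HwoA as [_ [Hirr _]].
  destruct Hr as [Hr|[_ Hr]].
  - apply (Hirr y1 (proj1 L1)). eapply rA_eqs; [exact Hr|apply eqs_refl|apply eqs_sym; auto].
  - destruct (W_spec (proj1 L1)) as [_ [Hirr' _]]. apply (Hirr' x (proj1 (proj2 L1)) Hr).
Qed.

Lemma rU_trans : forall x y z, mem x U -> mem y U -> mem z U -> rU x y -> rU y z -> rU x z.
Proof.
  intros x y z _ _ _ [x1 [y2 [Lx [Ly Hxy]]]] [y2' [z3 [Ly' [Lz Hyz]]]].
  pose proof (lc_uniq Ly Ly') as Hyy.
  destruct HwoA as [_ [_ [HtrA _]]].
  exists x1, z3; split; auto; split; auto.
  destruct Hxy as [Hxy|[Exy Hxy]]; destruct Hyz as [Hyz|[Eyz Hyz]].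
  - left. apply (HtrA x1 y2 z3 (proj1 Lx) (proj1 Ly) (proj1 Lz)); auto.
    eapply rA_eqs; [exact Hyz|apply eqs_sym; auto|apply eqs_refl].
  - left. eapply rA_eqs; [exact Hxy|apply eqs_refl|]. eapply eqs_trans; eauto.
  - left. eapply rA_eqs; [exact Hyz| |apply eqs_refl]. apply eqs_sym. eapply eqs_trans; eauto.
  - right. assert (Exz : eqs x1 z3) by (eapply eqs_trans; [exact Exy|]; eapply eqs_trans; [exact Hyy|exact Eyz]).
    split; auto.
    assert (HW : W x1 = W y2') by (apply W_eqs; eapply eqs_trans; [exact Exy|exact Hyy]).
    unfold rW in *. rewrite <- HW in Hyz.
    destruct (W_spec (proj1 Lx)) as [_ [_ [Htr _]]].
    apply (Htr x y z); auto.
    + exact (proj1 (proj2 Lx)).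
    + eapply mem_eqs_r; [apply eqs_sym; exact Exy|exact (proj1 (proj2 Ly))].
    + eapply mem_eqs_r; [apply eqs_sym; exact Exz|exact (proj1 (proj2 Lz))].
Qed.

Lemma rU_tri : forall x y, mem x U -> mem y U -> rU x y \/ eqs x y \/ rU y x.
Proof.
  intros x y Hx Hy. destruct (lc_ex Hx) as [y1 L1]. destruct (lc_ex Hy) as [y2 L2].
  destruct HwoA as [_ [_ [_ [HtriA _]]]].
  destruct (HtriA y1 y2 (proj1 L1) (proj1 L2)) as [Hr|[He|Hr]].
  - left; exists y1, y2; auto.
  - destruct (W_spec (proj1 L1)) as [_ [_ [_ [Htri _]]]].
    assert (Hy1 : mem y y1) by (eapply mem_eqs_r; [apply eqs_sym; exact He|exact (proj1 (proj2 L2))]).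
    destruct (Htri x y (proj1 (proj2 L1)) Hy1) as [Hr|[Hxy|Hr]].
    + left; exists y1, y2; auto.
    + right; left; auto.
    + right; right; exists y2, y1; split; auto; split; auto. right; split; [apply eqs_sym; auto|].
      unfold rW; rewrite <- (W_eqs _ _ He). exact Hr.
  - right; right; exists y2, y1; auto.
Qed.

Lemma rU_min : forall P : pset X -> Prop, (exists x, mem x U /\ P x) ->
  exists m, mem m U /\ P m /\ forall y, mem y U -> P y -> ~ rU y m.
Proof.
  intros P [x [Hx Px]].
  pose proof HwoA as [_ [_ [_ [_ HminA]]]].
  destruct (HminA (fun y => exists z, lc z y /\ P z)) as [y0 [Hy0 [[z0 [Lz0 Pz0]] Hy0m]]].
  { destruct (lc_ex Hx) as [y Ly]. exists y; split; [exact (proj1 Ly)|exists x; auto]. }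
  destruct (W_spec Hy0) as [_ [_ [_ [_ HminW]]]].
  destruct (HminW (fun z => lc z y0 /\ P z)) as [m [Hm [[Lm Pm] Hmm]]].
  { exists z0; split; [exact (proj1 (proj2 Lz0))|auto]. }
  exists m; split; [eapply lc_mem; eauto|split; auto].
  intros y Hy Py [y1 [y2 [L1 [L2 Hr]]]].
  pose proof (lc_uniq L2 Lm) as E2.
  destruct Hr as [Hr|[E Hr]].
  - apply (Hy0m y1 (proj1 L1)); [exists y; auto|].
    eapply rA_eqs; [exact Hr|apply eqs_refl|exact E2].
  - assert (E' : eqs y1 y0) by (eapply eqs_trans; eauto).
    apply (Hmm y).
    + eapply mem_eqs_r; [exact E'|exact (proj1 (proj2 L1))].
    + split; auto. eapply lc_eqs_y; eauto.
    + unfold rW in Hr; rewrite (W_eqs _ _ E') in Hr. exact Hr.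
Qed.

End LEX.
Unset Implicit Arguments.

Theorem mainTheorem13 (X G : Type) (mul : G -> G -> G) (inv : G -> G) (one : G)
  (act : G -> X -> X) (I : (X -> Prop) -> Prop)
  (HG : is_group mul inv one) (Hact : is_action mul one act)
  (HI : dyn_ideal act I) (Has : almost_simple mul inv one act I)
  (A : pset X) :
  inW act I A -> is_set A -> wellorderable_in_W act I A ->
  (forall y, mem y A -> is_set y /\ wellorderable_in_W act I y) ->
  inW act I (union A) /\ wellorderable_in_W act I (union A).
Proof.
  intros HAW HAs HwoAex Hys.
  destruct A as [x|K f]; [destruct HAs|].
  destruct HwoAex as [RA [HRAW [_ HwoA]]].
  destruct (inW_sym act I _ HAW) as [bA [HbA HsA]].
  destruct (inW_sym act I _ HRAW) as [bR [HbR HsR]].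
  pose (b := fun x => bA x \/ bR x).
  assert (Hb : I b) by (apply (I_union HI); auto).
  assert (Step1 : forall g, pstab act b g -> forall y, mem y (Node K f) -> eqs (pact act g y) y).
  { intros g Hg y Hy. apply (wo_fix HG Hact (pstab act b) HwoA); auto.
    - intros h Hh; apply (pstab_inv HG Hact); auto.
    - intros h Hh; split; [apply HsA|apply HsR]; eapply pstab_sub; try exact Hh;
        intros z Hz; unfold b; auto. }
  destruct (Has b Hb) as [a [Ha [Hba Hn]]].
  assert (Step2 : forall g, pstab act a g -> forall y, mem y (Node K f) ->
     forall z, mem z y -> eqs (pact act g z) z).
  { intros g Hg y Hy.
    destruct (Hys y Hy) as [_ [Ry [HRyW [_ Hwoy]]]].
    destruct (mem_sym act I _ _ HAW Hy) as [d [Hd Hsd]].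
    destruct (inW_sym act I _ HRyW) as [c [Hc Hsc]].
    pose (c' := fun x => d x \/ c x).
    assert (Hc' : I c') by (apply (I_union HI); auto).
    assert (Fy : forall h, pstab act c' h -> forall z, mem z y -> eqs (pact act h z) z).
    { intros h Hh z Hz. apply (wo_fix HG Hact (pstab act c') Hwoy); auto.
      - intros k Hk; apply (pstab_inv HG Hact); auto.
      - intros k Hk; split; [apply Hsd|apply Hsc]; eapply pstab_sub; try exact Hk;
          intros w Hw; unfold c'; auto. }
    pose (N := fun g => pstab act a g /\ forall z, mem z y -> eqs (pact act g z) z).
    assert (HaA : forall h, pstab act a h -> eqs (pact act h y) y).
    { intros h Hh; apply Step1; auto. eapply pstab_sub; [exact Hba|exact Hh]. }
    assert (HN : normal_subgroup_of mul inv one (pstab act a) N).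
    { split; [|split; [|split; [|split]]].
      - split; [apply (pstab_one Hact)|]. intros; apply (pact_one Hact).
      - intros g1 g2 [H1 H1'] [H2 H2']; split; [apply (pstab_mul Hact); auto|].
        intros z Hz. eapply eqs_trans; [apply (pact_mul Hact)|].
        eapply eqs_trans; [apply pact_eqs; apply H2'; auto| apply H1'; auto].
      - intros g1 [H1 H1']; split; [apply (pstab_inv HG Hact); auto|]. intros z Hz.
        assert (Hw : mem (pact act (inv g1) z) y).
        { eapply mem_eqs_r; [apply (HaA (inv g1)); apply (pstab_inv HG Hact); auto|apply mem_pact; auto]. }
        pose proof (H1' _ Hw) as E.
        eapply eqs_trans; [apply eqs_sym; exact E|]. apply (pact_inv_r HG Hact).
      - intros g1 [H1 _]; auto.
      - intros h n Hh [Hn1 Hn2]; split.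
        + apply (pstab_mul Hact); [apply (pstab_mul Hact)|apply (pstab_inv HG Hact)]; auto.
        + intros z Hz.
          assert (Hw : mem (pact act (inv h) z) y).
          { eapply mem_eqs_r; [apply (HaA (inv h)); apply (pstab_inv HG Hact); auto|apply mem_pact; auto]. }
          eapply eqs_trans; [apply (pact_mul Hact)|].
          eapply eqs_trans; [apply (pact_mul Hact)|].
          eapply eqs_trans; [apply pact_eqs; apply Hn2; exact Hw|].
          apply (pact_inv_r HG Hact). }
    assert (Hall := Hn (fun x => a x \/ c' x) (I_union HI _ _ Ha Hc')
                       (fun x Hx => or_introl Hx) N HN).
    apply (Hall); auto.
    intros h Hh. split.
    - eapply pstab_sub; [|exact Hh]. intros w Hw; auto.
    - apply Fy. eapply pstab_sub; [|exact Hh]. intros w Hw; auto. }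
  assert (HyW : forall y, mem y (Node K f) -> exists R, well_ordering R y).
  { intros y Hy. destruct (Hys y Hy) as [_ [R [_ [_ HR]]]]. exists R; auto. }
  assert (FixU : forall g, pstab act a g -> forall z, mem z (union (Node K f)) -> eqs (pact act g z) z).
  { intros g Hg z Hz. apply mem_union in Hz. destruct Hz as [y [Hy Hz]]. eapply Step2; eauto. }
  pose (F := fun p : {i : K & idx (f i)} => elt (f (projT1 p)) (projT2 p)).
  assert (HU : union (Node K f) = Node _ F) by reflexivity.
  assert (HFW : forall p, inW act I (F p)).
  { intro p. unfold F. apply inW_elt. exact (proj2 HAW (projT1 p)). }
  assert (inWU : inW act I (union (Node K f))).
  { rewrite HU. split; auto. exists a; split; auto. intros g Hg.
    rewrite pact_node. apply eqs_node_pw. intro p. apply FixU; auto.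
    rewrite HU. apply mem_node. }
  split; auto.
  rewrite HU in FixU.
  exists (buildR F (rU f RA)). split; [|split].
  - apply (inW_build HI (rU f RA) Ha FixU HFW).
  - exact Logic.I.
  - rewrite HU. apply wo_build.
    + intros x y x' y' H1 H2 H3. exact (rU_eqs x' y' H1 H2 H3).
    + exact (rU_irr HwoA HyW).
    + exact (rU_trans HwoA HyW).
    + exact (rU_tri HwoA HyW).
    + exact (rU_min HwoA HyW).
Qed.
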